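(* Let $k$ be a non-archimedean local field of residue characteristic $2$ with ring of integers $\mathfrak o$ and uniformizer $\varpi$. Let $\rho\in\mathfrak o$, $\ell\ge0$ an integer, and $X=\operatorname{meas}\{x\in\mathfrak o: x^2\equiv\rho \bmod \varpi^\ell\}$. Write $\rho=\eta^2+b$, where $b\mathfrak o$ is the quadratic defect of $\rho$. Then: (1) if $b\not\equiv0\bmod\varpi^\ell$, then $X=0$; (2) if $b\equiv0\bmod\varpi^\ell$ and $|\varpi^\ell|<|4\eta^2|$, then $X=2\,|\varpi^\ell/(2\eta)|$; (3) otherwise, $X=|\varpi|^{\lceil \ell/2\rceil}$.
   Context: The measure on $\mathfrak o$ is the additive Haar measure with $\mathfrak o$ of volume $1$; $|\cdot|$ is normalized by $|\varpi|=q^{-1}$, $q$ the residue field cardinality. The quadratic defect of $\rho\in k$ is the intersection of all ideals $b\mathfrak o$ over those $b\in k$ for which $\rho-b$ is a square in $k$ (it is $0$ when $\rho$ is a square). *)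

(* Defs.v *)
From HB Require Import structures.
From mathcomp Require Import all_boot all_order all_algebra.
From mathcomp Require Import all_classical all_reals all_analysis.
Set Implicit Arguments. Unset Strict Implicit. Unset Printing Implicit Defensive.
Import Order.TTheory GRing.Theory Num.Theory.
Local Open Scope classical_set_scope.
Local Open Scope ring_scope.

Definition is_nonarch_local_field (R : realType) (k : fieldType)
    (av : k -> R) (pi : k) (q : nat) : Prop :=
  [/\ (forall x, 0 <= av x) /\ (forall x, av x = 0 <-> x = 0),
      (forall x y, av (x * y) = av x * av y) /\
      (forall x y, av (x + y) <= Num.max (av x) (av y)),
      av pi = (q%:R)^-1 /\ (forall x, x != 0 -> exists n : int, av x = (q%:R : R) ^ n),
      (forall u : nat -> k,
         (forall e : R, 0 < e -> exists N, forall m n, (N <= m)%N -> (N <= n)%N ->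
            av (u m - u n) < e) ->
         exists l, forall e : R, 0 < e -> exists N, forall n, (N <= n)%N -> av (u n - l) < e)
    & (* the residue field o / pi o has exactly q elements *)
      (exists r : 'I_q -> k,
         [/\ forall i, av (r i) <= 1,
             forall i j, i != j -> ~ (av (r i - r j) < 1)
           & forall x, av x <= 1 -> exists i, av (x - r i) < 1])].

Definition residue_char2 (R : realType) (k : fieldType) (av : k -> R) : Prop :=
  av 2 < 1.

Definition ints (R : realType) (k : fieldType) (av : k -> R) : set k :=
  [set x | av x <= 1].
Definition pideal (R : realType) (k : fieldType) (av : k -> R) (b : k) : set k :=
  [set y | exists z, av z <= 1 /\ y = b * z].

Definition qdefect (R : realType) (k : fieldType) (av : k -> R) (rho : k) : set k :=
  [set y | forall b, (exists c, rho - b = c ^+ 2) -> pideal av b y].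

(* k viewed as a pointed type (point 0), needed by the generated sigma-algebra *)
Definition kpt (k : fieldType) : Type := k.
HB.instance Definition _ (k : fieldType) := Choice.on (kpt k).
HB.instance Definition _ (k : fieldType) := isPointed.Build (kpt k) (0 : k).

Definition balls (R : realType) (k : fieldType) (av : k -> R) : set (set (kpt k)) :=
  [set B | exists c (r : R), B = [set y | av (y - c) <= r]].

Notation kmeas av := (g_sigma_algebraType (balls av)).

Definition is_haar (R : realType) (k : fieldType) (av : k -> R)
    (mu : {measure set (kmeas av) -> \bar R}) : Prop :=
  (forall (a : k) (A : set (kmeas av)), measurable A ->
      mu [set a + x | x in A] = mu A) /\
  mu (ints av) = 1%E.

(* Main.v *)
Require Import Defs.
From HB Require Import structures.
From mathcomp Require Import all_boot all_order all_algebra.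
From mathcomp Require Import all_classical all_reals all_analysis.
From mathcomp Require Import ring lra zify.
Import Order.TTheory GRing.Theory Num.Theory.
Local Open Scope classical_set_scope.
Local Open Scope ring_scope.

Section Val.
Variables (R : realType) (k : fieldType) (av : k -> R) (pi : k) (q : nat).
Hypothesis Hk : is_nonarch_local_field av pi q.

Lemma av_ge0 x : 0 <= av x.
Proof. by case: Hk => [[H _]] *. Qed.
Lemma av_eq0 x : av x = 0 <-> x = 0.
Proof. by case: Hk => [[_ H]] *. Qed.
Lemma avM x y : av (x * y) = av x * av y.
Proof. by case: Hk => _ [H _] *. Qed.
Lemma avD x y : av (x + y) <= Num.max (av x) (av y).
Proof. by case: Hk => _ [_ H] *. Qed.
Lemma av0 : av 0 = 0.
Proof. exact/av_eq0. Qed.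
Lemma av1 : av 1 = 1.
Proof.
have h := avM 1 1; rewrite mulr1 in h.
have h0 : av 1 != 0 by apply/eqP => /av_eq0 /eqP; rewrite oner_eq0.
by apply: (mulIf h0); rewrite mul1r -h.
Qed.
Lemma avN x : av (- x) = av x.
Proof.
have h : av (-1) * av (-1) = 1 by rewrite -avM mulrNN mulr1 av1.
have h1 : av (-1) = 1.
  have := av_ge0 (-1); move: h; set t := av (-1) => h ht.
  have : (t - 1) * (t + 1) = 0 by rewrite mulrDr mulrBl h; ring.
  move/eqP; rewrite mulf_eq0 => /orP[/eqP|/eqP]; first by move/subr0_eq.
  move=> e; have : t = -1 by rewrite -(subr0 t) -e; ring.
  by move=> e'; move: ht; rewrite e' ler0N1.
by rewrite -mulN1r avM h1 mul1r.
Qed.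
Lemma avB x y : av (x - y) = av (y - x).
Proof. by rewrite -avN opprB. Qed.
Lemma avX x n : av (x ^+ n) = av x ^+ n.
Proof. elim: n => [|n IH]; first by rewrite !expr0 av1. by rewrite !exprS avM IH. Qed.
Lemma avV x : av (x^-1) = (av x)^-1.
Proof.
have [->|x0] := eqVneq x 0; first by rewrite invr0 av0 invr0.
have h : av x * av x^-1 = 1 by rewrite -avM mulfV // av1.
have ax0 : av x != 0 by apply/eqP => /av_eq0 /eqP; rewrite (negbTE x0).
by rewrite -[av x^-1]mul1r -(mulVf ax0) -mulrA h mulr1.
Qed.
Lemma avD_le x y r : av x <= r -> av y <= r -> av (x + y) <= r.
Proof. move=> hx hy; apply: le_trans (avD x y) _; by rewrite ge_max hx hy. Qed.
Lemma avD_lt x y r : av x < r -> av y < r -> av (x + y) < r.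
Proof. move=> hx hy; apply: le_lt_trans (avD x y) _; by rewrite gt_max hx hy. Qed.
Lemma avD_eq x y : av y < av x -> av (x + y) = av x.
Proof.
move=> h; apply/eqP; rewrite eq_le avD_le ?(ltW h) //=.
rewrite leNgt; apply/negP => h2.
have : av x < av x.
  have e : x = (x + y) + (- y) by ring.
  by rewrite {1}e; apply: avD_lt => //; rewrite avN.
by rewrite ltxx.
Qed.

Lemma q_gt1 : (1 < q)%N.
Proof.
case: Hk => _ _ _ _ [r [r1 r2 r3]].
have h0 : av 0 <= 1 by rewrite av0 ler01.
have h1 : av 1 <= 1 by rewrite av1.
have [i hi] := r3 0 h0.
have [j hj] := r3 1 h1.
case: (ltnP 1 q) => // hq.
have e : i = j by apply: ord_inj; have := ltn_ord i; have := ltn_ord j; lia.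
subst j; have : av 1 < 1.
  have e : (1:k) = (1 - r i) - (0 - r i) by ring.
  by rewrite {1}e; apply: avD_lt => //; rewrite avN.
by rewrite av1 ltxx.
Qed.

Lemma avpi : av pi = (q%:R)^-1.
Proof. by case: Hk => _ _ [H _]. Qed.
Lemma avpi_gt0 : 0 < av pi.
Proof. by rewrite avpi invr_gt0 ltr0n; apply: ltn_trans q_gt1. Qed.
Lemma avpi_lt1 : av pi < 1.
Proof. by rewrite avpi invf_lt1 ?ltr0n ?ltr1n ?q_gt1 //; apply: ltn_trans q_gt1. Qed.

Lemma pi_neq0 : pi != 0.
Proof. by apply/eqP => /av_eq0 h; move: avpi_gt0; rewrite h ltxx. Qed.

Lemma disc x : x != 0 -> av x <= 1 -> exists t : nat, av x = av pi ^+ t.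
Proof.
move=> x0 x1; case: Hk => _ _ [_ H] _ _.
have [n hn] := H x x0.
have q1 : (1 : R) < q%:R by rewrite ltr1n q_gt1.
case: n hn => m hm.
  exists 0%N; rewrite expr0.
  case: m hm => [|m] hm; first by rewrite hm expr0z.
  exfalso; move: x1; rewrite hm /= -[X in _ <= X](expr0 (q%:R : R)).
  by rewrite (ler_eXn2l q1).
exists m.+1; rewrite hm NegzE -exprnN avpi exprVn //.
Qed.

Lemma avpi_ge0 : 0 <= av pi. Proof. exact: ltW avpi_gt0. Qed.
Lemma avpiX_gt0 j : 0 < av pi ^+ j. Proof. exact: exprn_gt0 avpi_gt0. Qed.
Lemma avpiX_le1 j : av pi ^+ j <= 1. Proof. by apply: exprn_ile1; [exact: avpi_ge0|exact: ltW avpi_lt1]. Qed.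
Lemma avpiX_le m n : (n <= m)%N -> av pi ^+ m <= av pi ^+ n.
Proof. by rewrite (ler_iXn2l avpi_gt0 avpi_lt1). Qed.
Lemma avpiX_lt m n : (n < m)%N -> av pi ^+ m < av pi ^+ n.
Proof. by rewrite (ltr_iXn2l avpi_gt0 avpi_lt1). Qed.

Lemma lt_next x j : av x < av pi ^+ j -> av x <= av pi ^+ j.+1.
Proof.
move=> h; have [->|x0] := eqVneq x 0; first by rewrite av0 ltW // avpiX_gt0.
have [t ht] := @disc x x0 (le_trans (ltW h) (avpiX_le1 j)).
rewrite ht; rewrite ht (ltr_iXn2l avpi_gt0 avpi_lt1) in h.
exact: avpiX_le.
Qed.

Lemma pidealP c y : c != 0 -> pideal av c y <-> av y <= av c.
Proof.
move=> c0; split.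
  case=> z [z1 ->]; rewrite avM; rewrite -[X in _ <= X]mulr1.
  by rewrite ler_wpM2l // av_ge0.
move=> h; exists (c^-1 * y); split; last by rewrite mulrA mulfV // mul1r.
rewrite avM avV; have ac : 0 < av c.
  rewrite lt_def av_ge0 andbT; apply/eqP => /av_eq0 /eqP; by rewrite (negbTE c0).
by rewrite mulrC ler_pdivrMr // mul1r.
Qed.

Lemma half_le l s : (l <= s.*2)%N -> (uphalf l <= s)%N.
Proof. have := odd_double_half l; rewrite uphalf_half; case: (odd l) => /=; rewrite -!addnn; lia. Qed.
Lemma half_ge l : (l <= (uphalf l).*2)%N.
Proof. have := odd_double_half l; rewrite uphalf_half; case: (odd l) => /=; rewrite -!addnn; lia. Qed.
Lemma half_lt l : (0 < uphalf l)%N -> ((uphalf l).-1.*2 < l)%N.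
Proof. have := odd_double_half l; rewrite uphalf_half; case: (odd l) => /=; rewrite -!addnn; lia. Qed.

Variable (mu : {measure set (kmeas av) -> \bar R}).
Hypothesis Hmu : is_haar mu.

Definition ball (c : k) (r : R) : set (kmeas av) := [set y | av (y - c) <= r].

Lemma ball_meas c r : measurable (ball c r).
Proof. by apply: sub_sigma_algebra; exists c, r. Qed.

Lemma ball_transl c r : mu (ball c r) = mu (ball 0 r).
Proof.
rewrite -(Hmu.1 c (ball 0 r) (ball_meas 0 r)); congr (mu _).
apply/seteqP; split => y /=.
  by move=> h; exists (y - c); rewrite /ball /= ?subr0 //; ring.
by case=> z; rewrite /ball /= subr0 => h <-; have -> : c + z - c = z by ring.
Qed.


Lemma in_bigsetU n (F : 'I_n -> set (kmeas av)) y :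
  (\big[setU/set0]_(i < n) F i) y <-> exists i, F i y.
Proof.
rewrite -bigcup_seq /=; split.
  by case=> i _ h; exists i.
by case=> i h; exists i => //=; rewrite /= mem_index_enum.
Qed.

Lemma ball_step j : mu (ball 0 (av pi ^+ j)) = mu (ball 0 (av pi ^+ j.+1)) *+ q.
Proof.
have pj0 : pi ^+ j != 0 by rewrite expf_neq0 // pi_neq0.
have apj : 0 < av (pi ^+ j) by rewrite avX // avpiX_gt0.
case: (Hk) => _ _ _ _ [r [r1 r2 r3]].
have -> : ball 0 (av pi ^+ j) =
    \big[setU/set0]_(i < q) ball (pi ^+ j * r i) (av pi ^+ j.+1).
  apply/seteqP; split => y.
  - rewrite /ball/= subr0 => hy.
    have hz : av (y / pi ^+ j) <= 1.
      by rewrite avM avV avX ler_pdivrMr ?avpiX_gt0 // mul1r.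
    have [i hi] := r3 _ hz.
    apply/in_bigsetU; exists i; rewrite /ball /=.
    have e : y - pi ^+ j * r i = pi ^+ j * (y / pi ^+ j - r i).
      by rewrite mulrBr mulrCA mulfV // mulr1.
    rewrite e avM avX exprSr ler_wpM2l ?exprn_ge0 ?avpi_ge0 //.
    by have := @lt_next _ 0; rewrite expr0 expr1; apply.
  - move/in_bigsetU => [i]; rewrite /ball /= subr0 => hi.
    have e : y = (y - pi ^+ j * r i) + pi ^+ j * r i by ring.
    rewrite e; apply: avD_le => //.
      by apply: le_trans hi _; apply: avpiX_le.
    rewrite avM avX // -[X in _ <= X]mulr1 ler_wpM2l ?exprn_ge0 ?avpi_ge0 //.
rewrite measure_bigsetU_ord //.
- rewrite (eq_bigr (fun _ => mu (ball 0 (av pi ^+ j.+1)))); last by move=> i _; exact: ball_transl.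
  by rewrite sumr_const card_ord.
- by move=> i; exact: ball_meas.
move=> i i' _ _ [y []]; rewrite /ball /= => h1 h2.
case: (eqVneq i i') => // ne; exfalso; apply: (r2 _ _ ne).
have e : r i - r i' = (pi ^+ j)^-1 * ((y - pi ^+ j * r i') - (y - pi ^+ j * r i)).
  by rewrite [X in _ = _ * X](_ : _ = pi ^+ j * (r i - r i')) ?mulKf //; ring.
rewrite e avM avV avX //; rewrite ltr_pdivrMl ?avX ?exprn_gt0 ?avpi_gt0 // mulr1.
apply: le_lt_trans (_ : av pi ^+ j.+1 < _); last by apply: avpiX_lt.
by apply: avD_le => //; rewrite avN.
Qed.

Lemma mu_ball0 j : mu (ball 0 (av pi ^+ j)) = (av pi ^+ j)%:E.
Proof.
elim: j => [|j IH].
  rewrite expr0 -Hmu.2; congr (mu _); apply/seteqP; split => y;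
    by rewrite /ball /ints /= subr0.
move: IH; rewrite ball_step.
have q0 : (0 < q)%N by apply: ltn_trans (q_gt1).
have := measure_ge0 mu (ball 0 (av pi ^+ j.+1)).
case: (mu (ball 0 (av pi ^+ j.+1))) => [x| |] //.
  move=> _ h0; have : (x *+ q)%:E = (av pi ^+ j)%:E by rewrite EFin_natmul; exact: h0.
  case=> h; congr (_%:E).
  rewrite exprSr -h avpi -[x *+ q]mulr_natr mulfK //.
  by rewrite pnatr_eq0 -lt0n.
move=> _; rewrite -(prednK q0) => h; exfalso.
have e := enatmul_pinfty (R := R) q.-1.
have : (+oo%E : \bar R) = (av pi ^+ j)%:E by rewrite -e; exact: h.
by [].
move=> _; rewrite -(prednK q0) => h; exfalso.
have e := enatmul_ninfty (R := R) q.-1.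
have : (-oo%E : \bar R) = (av pi ^+ j)%:E by rewrite -e; exact: h.
by [].
Qed.

Lemma mu_ball c x : x != 0 -> av x <= 1 -> mu (ball c (av x)) = (av x)%:E.
Proof.
move=> x0 x1; have [t ->] := @disc x x0 x1.
by rewrite ball_transl mu_ball0.
Qed.


Lemma pideal_le c y : pideal av c y -> av y <= av c.
Proof.
case=> z [z1 ->]; rewrite avM; rewrite -[X in _ <= X]mulr1.
by rewrite ler_wpM2l // av_ge0.
Qed.

Lemma sqrt_le y l : av y <= 1 -> av y ^+ 2 <= av pi ^+ l -> av y <= av pi ^+ uphalf l.
Proof.
move=> y1 h; have [->|y0] := eqVneq y 0; first by rewrite av0 ltW // avpiX_gt0.
have [t ht] := @disc y y0 y1; rewrite ht; rewrite ht -exprM in h.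
apply: avpiX_le; apply: half_le; rewrite -muln2.
by move: h; rewrite (ler_iXn2l avpi_gt0 avpi_lt1).
Qed.

Lemma main (H2 : residue_char2 av) (rho : k) (Hrho : av rho <= 1) (l : nat) (eta b : k)
    (Hdec : rho = eta ^+ 2 + b) (Hb : pideal av b = qdefect av rho) :
  let X := mu [set x : kmeas av | av x <= 1 /\ pideal av (pi ^+ l) (x ^+ 2 - rho)] in
  [/\ ~ pideal av (pi ^+ l) b -> X = 0%E,
      pideal av (pi ^+ l) b -> av (pi ^+ l) < av (4 * eta ^+ 2) ->
        X = (2 * av (pi ^+ l / (2 * eta)))%:E
    & pideal av (pi ^+ l) b -> ~ (av (pi ^+ l) < av (4 * eta ^+ 2)) ->
        X = (av pi ^+ uphalf l)%:E].
Proof.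
move=> X.
have pl0 : pi ^+ l != 0 by rewrite expf_neq0 // pi_neq0.
set P := av (pi ^+ l).
have HS x : av x <= 1 /\ pideal av (pi ^+ l) (x ^+ 2 - rho) <-> av x <= 1 /\ av (x ^+ 2 - rho) <= P.
  by split=> -[h1 h2]; split=> //; apply/(pidealP _ _ pl0).
have F1 c : av b <= av (rho - c ^+ 2).
  have hb : qdefect av rho b by rewrite -Hb; exists 1; split; [rewrite av1 | rewrite mulr1].
  apply: pideal_le; apply: hb; exists c; ring.
have eta1 : av eta <= 1.
  have h := F1 0; rewrite expr0n /= subr0 in h.
  have e : eta ^+ 2 = rho - b by rewrite Hdec; ring.
  have : av (eta ^+ 2) <= 1.
    rewrite e; apply: avD_le => //; rewrite avN; exact: le_trans h Hrho.
  rewrite avX expr2 => h2; have := av_ge0 eta; nra.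
have key x : av b <= P -> (av (x ^+ 2 - rho) <= P <-> av ((x - eta) * (x + eta)) <= P).
  move=> hb; have e : x ^+ 2 - rho = (x - eta) * (x + eta) - b by rewrite Hdec; ring.
  rewrite e; split => h.
    have e2 : (x - eta) * (x + eta) = ((x - eta) * (x + eta) - b) + b by ring.
    by rewrite e2; apply: avD_le.
  by apply: avD_le => //; rewrite avN.
set a := 2 * eta.
have e4 : av (4 * eta ^+ 2) = av a ^+ 2 by rewrite -avX; congr av; rewrite /a; ring.
have A1 : av a <= 1.
  rewrite /a avM; have := av_ge0 eta; have := av_ge0 2; have := ltW H2; nra.
have Hu x : av x <= 1 -> av (x - eta) <= 1 by move=> h; apply: avD_le => //; rewrite avN.
have Hw x : av x <= 1 -> av (x + eta) <= 1 by move=> h; apply: avD_le.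
have ew x : x + eta = (x - eta) + a by rewrite /a; ring.
have eu x : x - eta = (x + eta) - a by rewrite /a; ring.
have hA0 : 0 <= av a := av_ge0 a.
rewrite /X; split.
- move=> nb.
  have hb : P < av b by rewrite ltNge; apply/negP => h; apply: nb; apply/(pidealP _ _ pl0).
  rewrite -(measure0 mu); congr (mu _); apply/seteqP; split => x //.
  move=> /HS [_ h]; have := F1 x; rewrite avB => h'.
  by have := lt_le_trans hb h'; rewrite ltNge h.
- move=> /pideal_le hb; rewrite e4 => hlt.
  have a0 : a != 0.
    apply/eqP => a0; move: hlt; rewrite a0 av0 expr0n /= ltNge.
    by rewrite av_ge0.
  set r := av (pi ^+ l / (2 * eta)).
  have hAp : 0 < av a by rewrite lt_def hA0 andbT; apply/eqP => /av_eq0 /eqP; rewrite (negbTE a0).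
  have rA : r * av a = P by rewrite /r -/a avM avV mulfVK // gt_eqF.
  have r0 : 0 <= r := av_ge0 _.
  have rltA : r < av a by nra.
  have -> : [set x : kmeas av | av x <= 1 /\ pideal av (pi ^+ l) (x ^+ 2 - rho)] =
      ball eta r `|` ball (- eta) r.
    apply/seteqP; split => y.
    - move=> /HS [y1]; rewrite (key y hb) avM => h.
      case: (ltP (av (y - eta)) (av a)) => hu.
        left; rewrite /ball /=.
        have hw : av (y + eta) = av a by rewrite ew addrC avD_eq.
        rewrite hw in h; nra.
      right; rewrite /ball /= opprK.
      rewrite leNgt; apply/negP => hw.
      have := av_ge0 (y - eta); nra.
    - rewrite /ball /=; case => [h|]; last rewrite opprK => h.
        split.
          have e : y = (y - eta) + eta by ring.
          by rewrite e; apply: avD_le => //; apply: le_trans h _; exact: le_trans (ltW rltA) A1.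
        apply/(pidealP _ _ pl0); rewrite (key y hb) avM.
        have hw : av (y + eta) <= av a by rewrite ew; apply: avD_le => //; exact: le_trans h (ltW rltA).
        have := av_ge0 (y - eta); have := av_ge0 (y + eta); nra.
      split.
        have e : y = (y + eta) - eta by ring.
        by rewrite e; apply: avD_le => //; rewrite ?avN // ; apply: le_trans h _; exact: le_trans (ltW rltA) A1.
      apply/(pidealP _ _ pl0); rewrite (key y hb) avM.
      have hu : av (y - eta) <= av a.
        by rewrite eu; apply: avD_le; rewrite ?avN //; exact: le_trans h (ltW rltA).
      have := av_ge0 (y - eta); have := av_ge0 (y + eta); nra.
  have x0 : pi ^+ l / (2 * eta) != 0 by rewrite mulf_neq0 // invr_eq0.
  have x1 : av (pi ^+ l / (2 * eta)) <= 1 by exact: le_trans (ltW rltA) A1.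
  rewrite measureU; [ | exact: ball_meas | exact: ball_meas | ].
    have E1 := mu_ball eta _ x0 x1; have E2 := mu_ball (- eta) _ x0 x1.
    transitivity ((r%:E + r%:E)%E); first by congr (_ + _)%E; [exact: E1 | exact: E2].
    by rewrite -EFinD; congr (_%:E); rewrite /r; ring.
      apply/seteqP; split => y // [] ; rewrite /ball /= opprK => h1 h2.
      have e : 2 * eta = (y + eta) - (y - eta) by ring.
      have : av a <= r by rewrite /a e; apply: avD_le => //; rewrite avN.
      by rewrite leNgt rltA.
- move=> /pideal_le hb; rewrite e4 => hge.
  have hAm : av a <= av pi ^+ uphalf l.
    apply: sqrt_le => //; rewrite -[av pi ^+ l]avX -/P leNgt; exact/negP.
  have pm1 : av pi ^+ uphalf l <= 1 := avpiX_le1 _.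
  have -> : [set x : kmeas av | av x <= 1 /\ pideal av (pi ^+ l) (x ^+ 2 - rho)] =
      ball eta (av (pi ^+ uphalf l)).
    rewrite avX; apply/seteqP; split => y.
    - move=> /HS [y1]; rewrite (key y hb) avM => h.
      rewrite /ball /=; rewrite leNgt; apply/negP => hu.
      have hw : av (y + eta) = av (y - eta) by rewrite ew avD_eq //; exact: le_lt_trans hAm hu.
      rewrite hw -expr2 in h.
      rewrite /P avX in h; have := sqrt_le _ _ (Hu _ y1) h; rewrite leNgt hu //.
    - rewrite /ball /= => h; split.
        have e : y = (y - eta) + eta by ring.
        by rewrite e; apply: avD_le => //; exact: le_trans h pm1.
      apply/(pidealP _ _ pl0); rewrite (key y hb) avM.
      have hw : av (y + eta) <= av pi ^+ uphalf l by rewrite ew; apply: avD_le.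
      apply: le_trans (_ : av pi ^+ uphalf l * av pi ^+ uphalf l <= _).
        by apply: ler_pM => //; apply: av_ge0.
      by rewrite /P avX -exprD; apply: avpiX_le; rewrite addnn; exact: half_ge.
  by rewrite mu_ball ?avX // expf_neq0 // pi_neq0.
Qed.

End Val.

Theorem lemma3p2 (R : realType) (k : fieldType) (av : k -> R) (pi : k) (q : nat)
    (Hk : is_nonarch_local_field av pi q) (H2 : residue_char2 av)
    (mu : {measure set (kmeas av) -> \bar R}) (Hmu : is_haar mu)
    (rho : k) (Hrho : av rho <= 1) (l : nat) (eta b : k)
    (Hdec : rho = eta ^+ 2 + b) (Hb : pideal av b = qdefect av rho) :
  let X := mu [set x : kmeas av | av x <= 1 /\ pideal av (pi ^+ l) (x ^+ 2 - rho)] in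
  [/\ ~ pideal av (pi ^+ l) b -> X = 0%E,
      pideal av (pi ^+ l) b -> av (pi ^+ l) < av (4 * eta ^+ 2) ->
        X = (2 * av (pi ^+ l / (2 * eta)))%:E
    & pideal av (pi ^+ l) b -> ~ (av (pi ^+ l) < av (4 * eta ^+ 2)) ->
        X = (av pi ^+ uphalf l)%:E].
Proof.
exact: (@main R k av pi q Hk mu Hmu H2 rho Hrho l eta b Hdec Hb).
Qed.
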